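(* In any one-dimensional robot game $(U,V)$, if two counter values $x,y\in\mathbb{Z}$ are winning, then $x+y$ is winning.
   Context: A robot game in dimension one is a pair $(U,V)$ of finite nonempty subsets of $\mathbb{Z}$; $U$ belongs to the reacher and $V$ to the opponent. From an initial counter value $x_0\in\mathbb{Z}$, a play proceeds in rounds: in a round starting at counter value $x$, the opponent chooses $v\in V$ and the counter becomes $x+v$, then the reacher chooses $u\in U$ and the counter becomes $x+v+u$, where the round ends. The reacher wins the play if some round ends at $0$; by convention the reacher wins immediately if the play starts at $0$. Strategies are functions from play prefixes to moves. A counter value $x$ is winning if the reacher has a strategy such that, against every opponent strategy, the play from $x$ is won by the reacher. *)

(* Defs.v *)
From mathcomp Require Import all_boot all_algebra.
Set Implicit Arguments. Unset Strict Implicit. Unset Printing Implicit Defensive.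
Import GRing.Theory.
Local Open Scope ring_scope.

(* A play prefix is recorded as the sequence of successive counter values
   (initial value, value after the opponent's move, value after the reacher's
   move, ...); moves are recoverable as consecutive differences. *)
Definition strategy := seq int -> int.

Fixpoint play (sigma tau : strategy) (x0 : int) (n : nat) : seq int :=
  match n with
  | O => [:: x0]
  | S n' =>
      let h := play sigma tau x0 n' in
      let y := last x0 h + tau h in
      let h' := rcons h y in
      rcons h' (y + sigma h')
  end.

Definition counter_at (sigma tau : strategy) (x0 : int) (n : nat) : int :=
  last x0 (play sigma tau x0 n).

Definition winning (U V : seq int) (x0 : int) : Prop :=
  exists sigma : strategy, (forall h, sigma h \in U) /\
    forall tau : strategy, (forall h, tau h \in V) ->
      exists n : nat, counter_at sigma tau x0 n = 0.

(* Main.v *)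
Require Import Defs.
From mathcomp Require Import all_boot all_algebra.
From mathcomp Require Import zify.
Import GRing.Theory.
Local Open Scope ring_scope.

Fixpoint evens (s : seq int) : seq int :=
  match s with [::] => [::] | a :: t => a :: odds t end
with odds (s : seq int) : seq int :=
  match s with [::] => [::] | a :: t => evens t end.

Lemma evens_rcons s a :
  evens (rcons s a) = (if odd (size s) then evens s else rcons (evens s) a) /\
  odds (rcons s a) = (if odd (size s) then rcons (odds s) a else odds s).
Proof.
elim: s => [|b s [IHe IHo]] //=.
by rewrite IHe IHo; case: (odd (size s)).
Qed.

Lemma size_play sg tu x0 n : size (play sg tu x0 n) = (n.*2).+1.
Proof. elim: n => [|n IH] //=; by rewrite !size_rcons IH doubleS. Qed.

Lemma evens_playS sg tu x0 n :
  evens (play sg tu x0 n.+1) = rcons (evens (play sg tu x0 n)) (counter_at sg tu x0 n.+1).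
Proof.
rewrite /counter_at /= last_rcons.
rewrite (proj1 (evens_rcons _ _)) size_rcons size_play /= odd_double /=.
by rewrite (proj1 (evens_rcons _ _)) size_play /= odd_double.
Qed.

Lemma evens_play sg tu x0 n :
  evens (play sg tu x0 n) = [seq counter_at sg tu x0 k | k <- iota 0 n.+1].
Proof.
elim: n => [|n IH]; first by rewrite /counter_at.
have -> : iota 0 n.+2 = rcons (iota 0 n.+1) n.+1.
  by rewrite -cats1 -addn1 iotaD.
by rewrite map_rcons -IH evens_playS.
Qed.

Lemma evens_rcons_play sg tu x0 n v :
  evens (rcons (play sg tu x0 n) v) = evens (play sg tu x0 n).
Proof. by rewrite (proj1 (evens_rcons _ _)) size_play /= odd_double. Qed.

Lemma play_cons sg tu x0 n : exists t, play sg tu x0 n = x0 :: t.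
Proof.
elim: n => [|n [t E]]; first by exists [::].
by exists (rcons (rcons t (last x0 (play sg tu x0 n) + tu (play sg tu x0 n)))
  (last x0 (play sg tu x0 n) + tu (play sg tu x0 n) +
   sg (rcons (play sg tu x0 n) (last x0 (play sg tu x0 n) + tu (play sg tu x0 n))))); rewrite /= E.
Qed.

Lemma last_play a sg tu x0 n : last a (play sg tu x0 n) = last x0 (play sg tu x0 n).
Proof. by have [t ->] := play_cons sg tu x0 n. Qed.

Lemma play_rcons sg tu x0 n : exists A,
  play sg tu x0 n = rcons A (counter_at sg tu x0 n) /\ size A = n.*2.
Proof.
case: n => [|n]; first by exists [::].
exists (rcons (play sg tu x0 n) (last x0 (play sg tu x0 n) + tu (play sg tu x0 n))).
by rewrite /counter_at /= last_rcons size_rcons size_play doubleS.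
Qed.

Theorem proposition1 (U V : seq int) (hU : U != [::]) (hV : V != [::])
  (x y : int) :
  winning U V x -> winning U V y -> winning U V (x + y).
Proof.
move=> [sx [sxU wx]] [sy [syU wy]].
pose sg : strategy := fun h => if y \in evens h then sy (drop (index y (evens h)).*2 h)
  else sx (map (fun z => z - y) h).
exists sg; split.
  by move=> h; rewrite /sg; case: ifP.
move=> tau tauV.
pose f := fun z : int => z + y.
pose tau' : strategy := fun h => tau (map f h).
have phase1 : forall n, y \notin evens (play sg tau (x+y) n) ->
    play sg tau (x+y) n = map f (play sx tau' x n).
  elim=> [|n IH] //.
  rewrite evens_playS mem_rcons in_cons negb_or => /andP [_ Hn].
  have E := IH Hn.
  rewrite [play sg tau (x+y) n.+1]/= [play sx tau' x n.+1]/= !map_rcons.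
  rewrite E.
  have lastm : last (x+y) (map f (play sx tau' x n)) = last x (play sx tau' x n) + y.
    by rewrite (last_map f).
  rewrite lastm -/(tau' _).
  have -> : sg (rcons (map f (play sx tau' x n))
                 (last x (play sx tau' x n) + y + tau' (play sx tau' x n)))
         = sx (rcons (play sx tau' x n) (last x (play sx tau' x n) + tau' (play sx tau' x n))).
    rewrite /sg -E evens_rcons_play (negbTE Hn) E map_rcons -map_comp.
    congr (sx (rcons _ _)).
      by rewrite -[RHS]map_id; apply: eq_map => z /=; rewrite /f addrK.
    by rewrite addrAC addrK.
  by rewrite /f; congr (rcons (rcons _ _) _); lia.
have [n0 Hn0] := wx tau' (fun h => tauV _).
have exy : exists m, counter_at sg tau (x+y) m == y.
  case: (boolP (y \in evens (play sg tau (x+y) n0))) => Hin.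
    by move: Hin; rewrite evens_play => /mapP [k _ Ek]; exists k; rewrite -Ek.
  exists n0; move: Hn0; rewrite /counter_at (phase1 _ Hin) (last_map f) => ->.
  by rewrite /f add0r.
case: (ex_minnP exy) => m /eqP Hm Hmin.
have Hidx : forall j, (y \in evens (play sg tau (x+y) (m+j))) /\
    index y (evens (play sg tau (x+y) (m+j))) = m.
  move=> j; rewrite evens_play -addnS iotaD map_cat /= mem_cat index_cat.
  have Hno : y \notin [seq counter_at sg tau (x + y) k | k <- iota 0 m].
    apply/negP => /mapP [k]; rewrite mem_iota add0n => /andP [_ Hk] Ek.
    have := Hmin k; rewrite -Ek eqxx => /(_ isT); lia.
  rewrite (negbTE Hno) size_map size_iota /= in_cons Hm eqxx /=.
  by split => //; rewrite addn0.
have [A [EA sA]] := play_rcons sg tau (x+y) m.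
pose tau'' : strategy := fun h => tau (A ++ h).
have phase2 : forall j, play sg tau (x+y) (m+j) = A ++ play sy tau'' y j.
  elim=> [|j IH]; first by rewrite addn0 EA Hm -cats1.
  rewrite addnS [play sg tau (x+y) (m+j).+1]/= [play sy tau'' y j.+1]/=.
  have [Hin Hix] := Hidx j.
  set v := last (x+y) (play sg tau (x + y) (m + j)) + tau (play sg tau (x + y) (m + j)).
  have -> : sg (rcons (play sg tau (x + y) (m + j)) v) = sy (rcons (play sy tau'' y j) v).
    rewrite /sg evens_rcons_play Hin Hix IH rcons_cat drop_size_cat //.
  rewrite /v IH last_cat last_play -/(tau'' _).
  by rewrite -!rcons_cat.
have [j0 Hj0] := wy tau'' (fun h => tauV _).
exists (m + j0).
by rewrite /counter_at phase2 last_cat last_play.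
Qed.
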